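(* Suppose $v_0=v^*$. Then for any two time steps $0\le a<b\le n$, $$\|P\widehat v_b-P\widehat v_a\|_2^2\le 50\cdot\alpha\cdot\log(\|v_b\|_2/\|v_a\|_2).$$
   Context: Setting: $\phi(x_1),\dots,\phi(x_n)\in\mathbb{R}^d$ are feature vectors of samples $x_1,\dots,x_n$; $\eta\in(0,0.1)$; $\beta\ge\alpha>0$; $v^*\in\mathbb{R}^d$ satisfies $\|v^*\|_2=1$, $\eta\sum_{i=1}^n\langle v^*,\phi(x_i)\rangle^2=\beta$, and $\eta\sum_{i=1}^n\langle w,\phi(x_i)\rangle^2\le\alpha$ for every $w$ with $\|w\|_2\le1$ and $\langle w,v^*\rangle=0$. $P=I-v^*(v^* )^\top$. The iterates are $v_i=v_{i-1}+\eta\langle\phi(x_i),v_{i-1}\rangle\phi(x_i)$ for $i\in[n]$, and $\widehat v_i=v_i/\|v_i\|_2$. $\log$ is the natural logarithm. *)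

(* Defs.v *)
From mathcomp Require Import all_boot all_order all_algebra.
From mathcomp Require Import all_classical all_reals all_analysis.
Set Implicit Arguments. Unset Strict Implicit. Unset Printing Implicit Defensive.
Import Order.TTheory GRing.Theory Num.Theory.
Local Open Scope ring_scope.

Section Defs.
Variables (R : realType) (d : nat).

Definition dotv (u w : 'rV[R]_d) : R := \sum_(i < d) u ord0 i * w ord0 i.
Definition norm2 (u : 'rV[R]_d) : R := Num.sqrt (dotv u u).

Definition projP (vs u : 'rV[R]_d) : 'rV[R]_d := u - (dotv vs u) *: vs.

(* Iterates: v_0 = v0, v_i = v_{i-1} + eta <phi(x_i), v_{i-1}> phi(x_i),
   where phi i is the feature vector phi(x_i) (used for i = 1..n). *)
Fixpoint iter_v (eta : R) (phi : nat -> 'rV[R]_d) (v0 : 'rV[R]_d) (i : nat)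
  : 'rV[R]_d :=
  match i with
  | 0 => v0
  | k.+1 => let vk := iter_v eta phi v0 k in
            vk + (eta * dotv (phi k.+1) vk) *: phi k.+1
  end.

Definition vhat (eta : R) (phi : nat -> 'rV[R]_d) (v0 : 'rV[R]_d) (i : nat)
  : 'rV[R]_d := (norm2 (iter_v eta phi v0 i))^-1 *: iter_v eta phi v0 i.

End Defs.

(* Main.v *)
Require Import Defs.
From mathcomp Require Import all_boot all_order all_algebra.
From mathcomp Require Import all_classical all_reals all_analysis.
From mathcomp Require Import ring lra.
Import Order.TTheory GRing.Theory Num.Theory.
Local Open Scope ring_scope.

Section H.
Variable R : realType.

Lemma cs_quad (H X Z : R) : 0 <= Z -> (forall t, 0 <= H - 2 * t * X + t ^+ 2 * Z) -> X ^+ 2 <= H * Z.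
Proof.
move=> HZ Ht.
have [Z0|Zn0] := eqVneq Z 0.
  have [X0|Xn0] := eqVneq X 0; first by rewrite X0 Z0; lra.
  have := Ht ((H + 1) / (2 * X)). rewrite Z0 mulr0 addr0.
  have -> : 2 * ((H + 1) / (2 * X)) * X = H + 1 by field; rewrite Xn0.
  lra.
have Zp : 0 < Z by rewrite lt0r Zn0.
have := Ht (X / Z).
have -> : H - 2 * (X / Z) * X + (X / Z) ^+ 2 * Z = (H * Z - X ^+ 2) / Z by field.
by rewrite pmulr_lge0 ?invr_gt0 // subr_ge0.
Qed.

Lemma cs_sum (r : seq nat) (c f g : nat -> R) : (forall i, 0 <= c i) ->
  (\sum_(i <- r) c i * f i * g i) ^+ 2 <=
  (\sum_(i <- r) c i * f i ^+ 2) * (\sum_(i <- r) c i * g i ^+ 2).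
Proof.
move=> c0; apply: cs_quad => [|t].
  by apply: sumr_ge0 => i _; apply: mulr_ge0 => //; apply: sqr_ge0.
have -> : \sum_(i <- r) c i * f i ^+ 2 - 2 * t * (\sum_(i <- r) c i * f i * g i) +
  t ^+ 2 * (\sum_(i <- r) c i * g i ^+ 2) = \sum_(i <- r) c i * (f i - t * g i) ^+ 2.
  rewrite mulr_sumr [t ^+ 2 * _]mulr_sumr -sumrN -!big_split /=.
  by apply: eq_bigr => i _; ring.
by apply: sumr_ge0 => i _; apply: mulr_ge0 => //; apply: sqr_ge0.
Qed.
End H.
Arguments cs_sum {R}.
Section D.
Variables (R : realType) (d : nat).
Implicit Types u w z : 'rV[R]_d.

Lemma dotvC u w : dotv u w = dotv w u.
Proof. by apply: eq_bigr => i _; rewrite mulrC. Qed.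
Lemma dotvDr u w z : dotv u (w + z) = dotv u w + dotv u z.
Proof. by rewrite /dotv -big_split; apply: eq_bigr => i _; rewrite !mxE mulrDr. Qed.
Lemma dotvBr u w z : dotv u (w - z) = dotv u w - dotv u z.
Proof. by rewrite /dotv -sumrB; apply: eq_bigr => i _; rewrite !mxE mulrBr. Qed.
Lemma dotvZr u w (k : R) : dotv u (k *: w) = k * dotv u w.
Proof. by rewrite /dotv mulr_sumr; apply: eq_bigr => i _; rewrite !mxE mulrCA. Qed.
Lemma dotvDl u w z : dotv (w + z) u = dotv w u + dotv z u.
Proof. by rewrite dotvC dotvDr !(dotvC u). Qed.
Lemma dotvBl u w z : dotv (w - z) u = dotv w u - dotv z u.
Proof. by rewrite dotvC dotvBr !(dotvC u). Qed.
Lemma dotvZl u w (k : R) : dotv (k *: w) u = k * dotv w u.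
Proof. by rewrite dotvC dotvZr dotvC. Qed.
Lemma dotv_ge0 u : 0 <= dotv u u.
Proof. by apply: sumr_ge0 => i _; rewrite -expr2 sqr_ge0. Qed.
Lemma norm2_sq u : norm2 u ^+ 2 = dotv u u.
Proof. by rewrite /norm2 sqr_sqrtr // dotv_ge0. Qed.
Lemma norm2_ge0 u : 0 <= norm2 u.
Proof. exact: sqrtr_ge0. Qed.

Variables (eta : R) (phi : nat -> 'rV[R]_d) (v0 : 'rV[R]_d).
Let it := iter_v eta phi v0.
Definition hh (i : nat) := dotv (phi i) (it i.-1).
Lemma itS k : it k.+1 = it k + (eta * dotv (phi k.+1) (it k)) *: phi k.+1.
Proof. by []. Qed.

Lemma iter_dot z a k : (a <= k)%N ->
  dotv z (it k) = dotv z (it a) + \sum_(a.+1 <= i < k.+1) eta * hh i * dotv z (phi i).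
Proof.
elim: k => [|k IH] ak.
  by move: ak; rewrite leqn0 => /eqP ->; rewrite big_geq // addr0.
have [->|ne] := eqVneq a k.+1; first by rewrite big_geq // addr0.
have ak' : (a <= k)%N by rewrite -ltnS ltn_neqAle ne ak.
rewrite big_nat_recr //= addrA -IH //.
by rewrite itS dotvDr dotvZr /hh /=.
Qed.

Lemma iter_norm a k : (a <= k)%N ->
  dotv (it a) (it a) + 2 * \sum_(a.+1 <= i < k.+1) eta * hh i ^+ 2 <= dotv (it k) (it k).
Proof.
move=> ak; elim: k ak => [|k IH] ak.
  by move: ak; rewrite leqn0 => /eqP ->; rewrite big_geq // mulr0 addr0.
have [->|ne] := eqVneq a k.+1; first by rewrite big_geq // mulr0 addr0.
have ak' : (a <= k)%N by rewrite -ltnS ltn_neqAle ne ak.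
rewrite big_nat_recr //= mulrDr addrA.
have := IH ak'.
rewrite itS dotvDr !dotvDl !dotvZr !dotvZl /hh /=.
rewrite (dotvC (it k) (phi k.+1)).
set x := dotv (phi k.+1) (it k).
have := dotv_ge0 (phi k.+1).
move=> hp h.
have : 0 <= (eta * x) * (eta * x) * dotv (phi k.+1) (phi k.+1).
  by apply: mulr_ge0 => //; rewrite -expr2 sqr_ge0.
nra.
Qed.
End D.
Arguments hh {R d}.
Arguments norm2_ge0 {R d}.
Arguments norm2_sq {R d}.
Arguments dotv_ge0 {R d}.
Arguments dotvC {R d}.
Arguments dotvDr {R d}.
Arguments dotvBr {R d}.
Arguments dotvZr {R d}.
Arguments dotvDl {R d}.
Arguments dotvBl {R d}.
Arguments dotvZl {R d}.
Arguments iter_norm {R d} eta phi v0 {a k}.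
Arguments iter_dot {R d} eta phi v0 z {a k}.
Section A.
Variable R : realType.

Lemma final_alg (A B N S al Du Ea : R) : 0 <= al -> 1 <= A -> A <= B -> 0 <= N -> 0 <= S ->
  S <= al * N -> Du ^+ 2 <= (B ^+ 2 - A ^+ 2) / 2 * S ->
  Ea ^+ 2 <= (A ^+ 2 - 1) / 2 * S -> N = (Ea + Du) / B - Ea / A ->
  N <= 2 * al * (1 - A / B).
Proof.
move=> al0 A1 AB N0 S0 SN HD HE HN.
have A0 : 0 < A by lra.
have B0 : 0 < B by lra.
set q := Ea / A.
have hq : q ^+ 2 <= S / 2.
  have -> : q ^+ 2 = Ea ^+ 2 / A ^+ 2 by rewrite /q expr_div_n.
  rewrite ler_pdivrMr ?exprn_gt0 //.
  apply: (le_trans HE). nra.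
have HNB : N * B = Du - q * (B - A).
  rewrite HN /q; field; lra.
have h1 : (N * B) ^+ 2 <= 2 * S * B * (B - A).
  rewrite HNB.
  have : 0 <= (Du + q * (B - A)) ^+ 2 by apply: sqr_ge0.
  have : q ^+ 2 * (B - A) ^+ 2 <= S / 2 * (B - A) ^+ 2.
    by apply: ler_wpM2r => //; apply: sqr_ge0.
  nra.
have [->|Np] := eqVneq N 0.
  have : 0 <= 1 - A / B.
    by rewrite subr_ge0 ler_pdivrMr // mul1r.
  nra.
have Npos : 0 < N by rewrite lt0r Np.
have h2 : N * B ^+ 2 <= 2 * al * B * (B - A).
  have : (N * B) ^+ 2 <= 2 * (al * N) * B * (B - A).
    apply: (le_trans h1).
    have hb : 0 <= B * (B - A) by apply: mulr_ge0; lra.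
    have -> : 2 * S * B * (B - A) = 2 * (S * (B * (B - A))) by ring.
    have -> : 2 * (al * N) * B * (B - A) = 2 * ((al * N) * (B * (B - A))) by ring.
    rewrite ler_pM2l //; by apply: ler_wpM2r.
  move=> h; rewrite -(@ler_pM2l _ N) //.
  have -> : N * (N * B ^+ 2) = (N * B) ^+ 2 by ring.
  have -> : N * (2 * al * B * (B - A)) = 2 * (al * N) * B * (B - A) by ring.
  exact: h.
have -> : 2 * al * (1 - A / B) = 2 * al * B * (B - A) / B ^+ 2 by field; lra.
by rewrite ler_pdivlMr ?exprn_gt0.
Qed.

Lemma ln_ge_1sub (A B : R) : 0 < A -> A <= B -> 1 - A / B <= ln (B / A).
Proof.
move=> A0 AB.
have B0 : 0 < B by lra.
have -> : B / A = (A / B)^-1 by rewrite invf_div.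
rewrite lnV ?posrE ?divr_gt0 //.
have := @le_ln1Dx R (A / B - 1).
rewrite addrCA subrr addr0 => h.
have : -1 < A / B - 1 by rewrite ltrBDr addrC subrr divr_gt0.
move/h; lra.
Qed.

Lemma subrange (F : nat -> R) m1 m2 m3 m4 : (m1 <= m2)%N -> (m2 <= m3)%N -> (m3 <= m4)%N ->
  (forall i, 0 <= F i) -> \sum_(m2 <= i < m3) F i <= \sum_(m1 <= i < m4) F i.
Proof.
move=> h12 h23 h34 F0.
rewrite (big_cat_nat h12 (leq_trans h23 h34)) /=.
rewrite (big_cat_nat h23 h34) /=.
have := @sumr_ge0 _ _ (index_iota m1 m2) xpredT F (fun i _ => F0 i).
have := @sumr_ge0 _ _ (index_iota m3 m4) xpredT F (fun i _ => F0 i).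
lra.
Qed.
End A.
Arguments final_alg {R}.
Arguments ln_ge_1sub {R}.
Arguments subrange {R}.

Lemma scale_hyp (R : realType) (d n : nat) (phi : nat -> 'rV[R]_d) (eta alpha : R) (vstar : 'rV[R]_d) :
  0 < eta ->
  (forall w : 'rV[R]_d, norm2 w <= 1 -> dotv w vstar = 0 ->
     eta * (\sum_(1 <= i < n.+1) (dotv w (phi i)) ^+ 2) <= alpha) ->
  forall z, 0 < dotv z z -> dotv z vstar = 0 ->
  eta * (\sum_(1 <= i < n.+1) (dotv z (phi i)) ^+ 2) <= alpha * dotv z z.
Proof.
move=> eta0 H z zp zv.
set s := Num.sqrt (dotv z z).
have s0 : 0 < s by rewrite sqrtr_gt0.
have ss : s ^+ 2 = dotv z z by rewrite sqr_sqrtr // ltW.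
have := H (s^-1 *: z).
rewrite /norm2 !dotvZl !dotvZr zv mulr0 => /(_ _ erefl).
have -> : s^-1 * (s^-1 * dotv z z) = 1 by rewrite -ss; field; rewrite gt_eqF.
rewrite sqrtr1 lexx => /(_ erefl).
under eq_bigr => i _ do rewrite dotvZl exprMn.
rewrite -mulr_sumr mulrCA exprVn ler_pdivrMl ?exprn_gt0 // ss.
by rewrite [alpha * _]mulrC.
Qed.

Arguments scale_hyp {R d n phi eta alpha vstar}.

Theorem lemmaC2 (R : realType) (d n : nat) (phi : nat -> 'rV[R]_d)
    (eta alpha beta : R) (vstar : 'rV[R]_d) :
  0 < eta -> eta < 1 / 10 ->
  0 < alpha -> alpha <= beta ->
  norm2 vstar = 1 ->
  eta * (\sum_(1 <= i < n.+1) (dotv vstar (phi i)) ^+ 2) = beta ->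
  (forall w : 'rV[R]_d, norm2 w <= 1 -> dotv w vstar = 0 ->
     eta * (\sum_(1 <= i < n.+1) (dotv w (phi i)) ^+ 2) <= alpha) ->
  forall a b : nat, (a < b)%N -> (b <= n)%N ->
    norm2 (projP vstar (vhat eta phi vstar b) - projP vstar (vhat eta phi vstar a)) ^+ 2
    <= 50 * alpha * ln (norm2 (iter_v eta phi vstar b) / norm2 (iter_v eta phi vstar a)).
Proof.
move=> eta0 _ al0 _ nv _ Hw a b ab bn.
have vv : dotv vstar vstar = 1 by rewrite -norm2_sq nv expr1n.
set va := iter_v eta phi vstar a.
set vb := iter_v eta phi vstar b.
set A := norm2 va. set B := norm2 vb.
have hA := iter_norm eta phi vstar (leq0n a).
rewrite -/va /= vv in hA.
have hB := iter_norm eta phi vstar (ltnW ab).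
rewrite -/va -/vb in hB.
have sum0 : forall m k, 0 <= \sum_(m <= i < k) eta * hh eta phi vstar i ^+ 2.
  by move=> m k; apply: sumr_ge0 => i _; apply: mulr_ge0; [exact: ltW|exact: sqr_ge0].
have A0 : 0 <= A := norm2_ge0 va.
have B0 : 0 <= B := norm2_ge0 vb.
have A2 : 1 <= A ^+ 2 by rewrite norm2_sq; have := sum0 1%N a.+1; lra.
have A1 : 1 <= A by nra.
have B2 : A ^+ 2 <= B ^+ 2 by rewrite !norm2_sq; have := sum0 a.+1 b.+1; lra.
have AB : A <= B by nra.
set u := projP vstar (vhat eta phi vstar b) - projP vstar (vhat eta phi vstar a).
have projv : forall x, dotv (projP vstar x) vstar = 0.
  by move=> x; rewrite /projP dotvBl dotvZl vv mulr1 dotvC subrr.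
have uv : dotv u vstar = 0 by rewrite /u dotvBl !projv subrr.
have uproj : forall x, dotv u (projP vstar x) = dotv u x.
  by move=> x; rewrite /projP dotvBr dotvZr (dotvC u) uv mulr0 subr0.
have HN : dotv u u = (dotv u va + (dotv u vb - dotv u va)) / B - dotv u va / A.
  rewrite {2}/u dotvBr !uproj /vhat !dotvZr -/va -/vb -/A -/B.
  by rewrite addrCA subrr addr0 [B^-1 * _]mulrC [A^-1 * _]mulrC.
set g := fun i => dotv u (phi i).
set S := \sum_(1 <= i < n.+1) eta * g i ^+ 2.
have g0 : forall i, 0 <= eta * g i ^+ 2.
  by move=> i; apply: mulr_ge0; [exact: ltW|exact: sqr_ge0].
have S0 : 0 <= S by apply: sumr_ge0 => i _; exact: g0.
have lnp : 0 <= ln (B / A) by apply: ln_ge0; rewrite ler_pdivlMr ?mul1r //; lra.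
rewrite norm2_sq.
have [uz|up] := eqVneq (dotv u u) 0.
  by rewrite uz; apply: mulr_ge0 => //; lra.
have upos : 0 < dotv u u by rewrite lt0r up dotv_ge0.
have SN : S <= alpha * dotv u u.
  rewrite /S -mulr_sumr; exact: (scale_hyp eta0 Hw u upos uv).
have HD : (dotv u vb - dotv u va) ^+ 2 <= (B ^+ 2 - A ^+ 2) / 2 * S.
  rewrite (iter_dot _ _ _ u (ltnW ab)) -/va -/vb addrC addKr.
  apply: (le_trans (cs_sum _ _ _ _ (fun _ => ltW eta0))).
  have h1 : \sum_(a.+1 <= i < b.+1) eta * hh eta phi vstar i ^+ 2 <= (B ^+ 2 - A ^+ 2) / 2.
    rewrite !norm2_sq; lra.
  have h2 : \sum_(a.+1 <= i < b.+1) eta * g i ^+ 2 <= S.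
    by rewrite /S; apply: (subrange (fun i => eta * g i ^+ 2) _ _ _ _ (ltn0Sn a) (ltnW ab : (a.+1 <= b.+1)%N) (bn : (b.+1 <= n.+1)%N) g0).
  apply: ler_pM => //; apply: sumr_ge0 => i _; exact: g0.
have HE : dotv u va ^+ 2 <= (A ^+ 2 - 1) / 2 * S.
  rewrite (iter_dot _ _ _ u (leq0n a)) /= uv add0r.
  apply: (le_trans (cs_sum _ _ _ _ (fun _ => ltW eta0))).
  have h1 : \sum_(1 <= i < a.+1) eta * hh eta phi vstar i ^+ 2 <= (A ^+ 2 - 1) / 2.
    rewrite !norm2_sq; lra.
  have h2 : \sum_(1 <= i < a.+1) eta * g i ^+ 2 <= S.
    apply: subrange => //; apply: leq_trans bn; exact: ltnW.
  apply: ler_pM => //; apply: sumr_ge0 => i _; exact: g0.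
have := final_alg _ _ _ _ _ _ _ (ltW al0) A1 AB (dotv_ge0 u) S0 SN HD HE HN.
have := ln_ge_1sub _ _ (lt_le_trans ltr01 A1) AB.
move=> hl hf.
apply: (le_trans hf).
have : 2 * alpha * (1 - A / B) <= 2 * alpha * ln (B / A).
  by apply: ler_wpM2l => //; lra.
nra.
Qed.
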